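(* Let $r\ge 2$ and $t\ge 1$ be integers, and let $H$ be an $r$-partite $r$-graph. If $|E(H)|>\frac{t-1}{r}\,|\partial H|$, then $H$ contains (as a subhypergraph) every tight $r$-tree $T$ having $t$ edges.
   Context: An $r$-graph is an $r$-uniform hypergraph. An $r$-graph is $r$-partite if its vertex set can be partitioned into $r$ classes $V_1,\dots,V_r$ such that every edge contains exactly one vertex from each class. The shadow $\partial H$ of an $r$-graph $H$ is the set of all $(r-1)$-element sets contained in some edge of $H$. A tight $r$-tree is any $r$-graph constructed as follows: start with $T_1$ consisting of a single edge $e_1$ and its $r$ vertices; at each step $i\ge 2$ add a new edge $e_i$ containing exactly one new vertex $v_i$ (not in $T_{i-1}$) such that $e_i\setminus\{v_i\}$ is a subset of some edge of $T_{i-1}$, obtaining $T_i$. *)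

(* Defs.v *)
From mathcomp Require Import all_boot.
Set Implicit Arguments. Unset Strict Implicit. Unset Printing Implicit Defensive.

Definition r_graph (V : finType) (r : nat) (E : {set {set V}}) : Prop :=
  forall e, e \in E -> #|e| = r.

Definition r_partite (V : finType) (r : nat) (E : {set {set V}}) : Prop :=
  exists c : V -> 'I_r,
    forall e, e \in E -> forall i : 'I_r, #|[set x in e | c x == i]| = 1.

Definition shadow (V : finType) (r : nat) (E : {set {set V}}) : {set {set V}} :=
  [set f : {set V} | (#|f| == r.-1) && [exists e in E, f \subset e]].

Definition tight_tree_seq (W : finType) (r : nat) (s : seq {set W}) : Prop :=
  match s with
  | [::] => False
  | e1 :: _ =>
      #|e1| = r /\
      forall i, 0 < i < size s ->
        #|nth set0 s i| = r /\
        exists v, v \in nth set0 s i /\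
          (forall j, j < i -> v \notin nth set0 s j) /\
          exists j, j < i /\ (nth set0 s i :\ v) \subset nth set0 s j
  end.

Definition tight_tree (W : finType) (r : nat) (ET : {set {set W}}) : Prop :=
  (exists s : seq {set W}, tight_tree_seq r s /\ ET = [set e in s]) /\
  (forall w : W, exists2 e, e \in ET & w \in e).

Definition contains_copy (V W : finType) (E : {set {set V}}) (ET : {set {set W}})
  : Prop :=
  exists phi : W -> V, injective phi /\ forall e, e \in ET -> phi @: e \in E.

(* Main.v *)
Require Import Defs.
From mathcomp Require Import all_boot.
From mathcomp Require Import zify.
Set Implicit Arguments. Unset Strict Implicit. Unset Printing Implicit Defensive.

Lemma rainbow_inj (V : finType) (r : nat) (c : V -> 'I_r) (e : {set V}) :
  (forall i, #|[set x in e | c x == i]| = 1) -> {in e &, injective c}.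
Proof.
move=> H x y xe ye cxy.
have := H (c x); move/eqP/cards1P => [z Hz].
have hx: x \in [set x0 in e | c x0 == c x] by rewrite inE xe eqxx.
have hy: y \in [set x0 in e | c x0 == c x] by rewrite inE ye cxy eqxx.
by move: hx hy; rewrite Hz !inE => /eqP -> /eqP ->.
Qed.

Lemma inj_full (T : finType) (r : nat) (tau : T -> 'I_r) (e : {set T}) :
  #|e| = r -> {in e &, injective tau} -> tau @: e = setT.
Proof.
move=> ce inj; apply/eqP; rewrite eqEcard subsetT cardsT card_ord card_in_imset // ce leqnn.
by [].
Qed.

Lemma missing (T : finType) (r : nat) (tau : T -> 'I_r) (e : {set T}) v k :
  #|e| = r -> {in e &, injective tau} -> v \in e -> k \notin tau @: (e :\ v) ->
  k = tau v.
Proof.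
move=> ce inj ve kn.
have: k \in tau @: e by rewrite inj_full // inE.
case/imsetP=> u ue kE; subst k.
case: (eqVneq u v) => [->//|uv].
by case/negP: kn; apply: imset_f; rewrite !inE uv ue.
Qed.

Definition deg (V : finType) (K : {set {set V}}) (f : {set V}) :=
  #|[set e' in K | f \subset e']|.

Definition goodb (V : finType) (r : nat) (c : V -> 'I_r) (d : 'I_r -> nat)
  (K : {set {set V}}) :=
  [forall e in K, forall x in e, d (c x) <= deg K (e :\ x)].

Definition Sj (V : finType) (r : nat) (c : V -> 'I_r) (j : 'I_r)
  (E : {set {set V}}) : {set {set V}} :=
  [set f | [exists e in E, exists x in e, (c x == j) && (f == e :\ x)]].

Definition cost (V : finType) (r : nat) (c : V -> 'I_r) (d : 'I_r -> nat)
  (E : {set {set V}}) := \sum_(j < r) (d j).-1 * #|Sj c j E|.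

Lemma SjP (V : finType) (r : nat) (c : V -> 'I_r) j (E : {set {set V}}) (f : {set V}) :
  reflect (exists (e : {set V}) x, [/\ e \in E, x \in e, c x = j & f = e :\ x]) (f \in Sj c j E).
Proof.
rewrite inE; apply: (iffP existsP).
  by move=> [e /andP [eE /existsP [x /andP [xe /andP [/eqP cx /eqP fe]]]]]; exists e, x.
move=> [e [x [eE xe cx fe]]]; exists e; rewrite eE /=; apply/existsP; exists x.
by rewrite xe cx fe !eqxx.
Qed.

Lemma SjS (V : finType) (r : nat) (c : V -> 'I_r) j (E E' : {set {set V}}) :
  E' \subset E -> Sj c j E' \subset Sj c j E.
Proof.
move=> sE; apply/subsetP => f /SjP [e [x [eE xe cx fe]]]; apply/SjP.
by exists e, x; split => //; apply: (subsetP sE).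
Qed.

Lemma card_split (T : finType) (A : {set T}) (P : pred T) :
  #|A| = #|[set x in A | P x]| + #|[set x in A | ~~ P x]|.
Proof.
rewrite -(cardsID [set x | P x] A); congr (_ + _); apply: eq_card => x;
  by rewrite !inE andbC.
Qed.

Lemma core (V : finType) (r : nat) (c : V -> 'I_r) (d : 'I_r -> nat) :
  forall E : {set {set V}}, exists K : {set {set V}}, [/\ K \subset E, goodb c d K &
     #|E| <= #|K| + cost c d E].
Proof.
move=> E; have [n] := ubnP #|E|; elim: n E => // n IH E ltE.
case: (boolP (goodb c d E)) => gE.
  by exists E; split => //; apply: leq_addr.
move: gE => /forallPn [e]; rewrite negb_imply => /andP [eE].
move=> /forallPn [x]; rewrite negb_imply => /andP [xe]; rewrite -ltnNge => hdeg.
set f := e :\ x.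
set E' := [set e' in E | ~~ (f \subset e')].
have sE' : E' \subset E by apply/subsetP => y; rewrite inE => /andP [].
have ltE' : #|E'| < n.
  apply: (@leq_trans #|E|); last by rewrite -ltnS.
  apply: proper_card; rewrite properE sE' /=.
  apply/subsetPn; exists e => //; rewrite inE negb_and subsetDl orbT //.
have [K [sK gK cK]] := IH E' ltE'.
exists K; split => //; first exact: subset_trans sK sE'.
have hcard : #|E| = #|E'| + deg E f.
  rewrite (card_split E (fun e' => ~~ (f \subset e'))) /deg.
  by congr (_ + _); apply: eq_card => y; rewrite !inE ?negbK.
have hcost : cost c d E' + (d (c x)).-1 <= cost c d E.
  rewrite /cost (bigD1 (c x)) //= [X in _ <= X](bigD1 (c x)) //=.
  have lt : #|Sj c (c x) E'| < #|Sj c (c x) E|.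
    apply: proper_card; rewrite properE SjS //=.
    apply/subsetPn; exists f; first by apply/SjP; exists e, x.
    apply/SjP => [[e2 [x2 [e2E x2e cx2 fe2]]]].
    by move: e2E; rewrite inE fe2 subsetDl andbF.
  rewrite addnAC; apply: leq_add.
    by rewrite -mulnSr; apply: leq_mul.
  by apply: leq_sum => j _; apply: leq_mul => //; apply: subset_leq_card; apply: SjS.
have hd : deg E f <= (d (c x)).-1.
  by rewrite -ltnS prednK //; apply: leq_ltn_trans hdeg.
clearbody f E'; lia.
Qed.

Lemma tts_size (W : finType) r (s : seq {set W}) : tight_tree_seq r s -> 0 < size s.
Proof. by case: s. Qed.

Lemma tts_card (W : finType) r (s : seq {set W}) : tight_tree_seq r s ->
  forall i, i < size s -> #|nth set0 s i| = r.
Proof.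
case: s => [//|e1 s'] /= [h0 h] [|i] //= lt.
by have [] := h i.+1 lt.
Qed.

Lemma tts_step (W : finType) r (s : seq {set W}) : tight_tree_seq r s ->
  forall i, 0 < i < size s -> exists v, [/\ v \in nth set0 s i,
    (forall j, j < i -> v \notin nth set0 s j) &
    exists2 j, j < i & (nth set0 s i :\ v) \subset nth set0 s j].
Proof.
case: s => [//|e1 s'] /= [h0 h] i hi.
have [_ [v [vi [vn [j [ji sj]]]]]] := h i hi.
by exists v; split => //; exists j.
Qed.

Definition Uset (W : finType) (s : seq {set W}) m :=
  [set w | [exists i : 'I_m, w \in nth set0 s i]].

Lemma UsetP (W : finType) (s : seq {set W}) m w :
  reflect (exists2 i, i < m & w \in nth set0 s i) (w \in Uset s m).
Proof.
rewrite inE; apply: (iffP existsP) => [[i Hi]|[i lt Hi]].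
  by exists i.
by exists (Ordinal lt).
Qed.

Lemma Uset_step (W : finType) (s : seq {set W}) m v j :
  v \in nth set0 s m -> j < m -> (nth set0 s m :\ v) \subset nth set0 s j ->
  forall w, w \in Uset s m.+1 -> (w == v) || (w \in Uset s m).
Proof.
move=> vm jm sj w /UsetP [i lt wi].
case: (ltngtP i m) => [im|mi|ie]; first by apply/orP; right; apply/UsetP; exists i.
  by exfalso; lia.
subst i; case: (eqVneq w v) => //= wv.
apply/UsetP; exists j => //; apply: (subsetP sj); by rewrite !inE wv.
Qed.

Lemma Uset_card (W : finType) r (s : seq {set W}) : tight_tree_seq r s ->
  forall m, 0 < m <= size s -> #|Uset s m| <= r + m.-1.
Proof.
move=> hs; elim=> [//|m IH] /andP [_ lt].
case: (posnP m) => [m0|mpos].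
  subst m; rewrite addn0 -(tts_card hs (tts_size hs)); apply: subset_leq_card.
  apply/subsetP => w /UsetP [i]; by rewrite ltnS leqn0 => /eqP ->.
have [v [vm vn [j jm sj]]] := tts_step hs (i := m) (ltac:(by rewrite mpos)).
have sub : Uset s m.+1 \subset v |: Uset s m.
  apply/subsetP => w /(Uset_step vm jm sj); by rewrite !inE.
apply: leq_trans (subset_leq_card sub) _.
rewrite cardsU1; have := IH (ltac:(rewrite mpos; exact: ltnW)).
case: (v \in Uset s m); simpl; lia.
Qed.

Lemma coloring (W : finType) n (s : seq {set W}) : tight_tree_seq n.+1 s ->
  exists tau : W -> 'I_n.+1, forall i, i < size s -> {in nth set0 s i &, injective tau}.
Proof.
move=> hs.
suff: forall m, 0 < m <= size s -> exists tau : W -> 'I_n.+1,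
   forall i, i < m -> {in nth set0 s i &, injective tau}.
  by move=> /(_ (size s)); rewrite leqnn (tts_size hs); apply.
elim=> [//|m IH] /andP [_ lt].
case: (posnP m) => [m0|mpos].
  subst m; set e0 := nth set0 s 0.
  exists (fun w => inord (index w (enum e0))) => i; rewrite ltnS leqn0 => /eqP -> x y xe ye.
  have hx : index x (enum e0) <= n.
    by rewrite -ltnS -(tts_card hs (tts_size hs)) cardE index_mem mem_enum.
  have hy : index y (enum e0) <= n.
    by rewrite -ltnS -(tts_card hs (tts_size hs)) cardE index_mem mem_enum.
  move/(congr1 (@nat_of_ord _)); rewrite !inordK // => h.
  by apply: (@index_inj _ x (enum e0) x y); rewrite ?mem_enum.
have [tau htau] := IH (ltac:(rewrite mpos; exact: ltnW)).
have [v [vm vn [j jm sj]]] := tts_step hs (i := m) (ltac:(by rewrite mpos)).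
set em := nth set0 s m.
have : exists k, k \notin tau @: (em :\ v).
  apply/existsP; rewrite -negb_forall; apply/negP => /forallP hall.
  have : #|[set: 'I_n.+1]| <= #|tau @: (em :\ v)|.
    by apply: subset_leq_card; apply/subsetP => k _; apply: hall.
  rewrite cardsT card_ord => h1.
  have := leq_trans h1 (leq_imset_card _ _).
  have hc := cardsD1 v em; rewrite vm (tts_card hs lt) in hc; lia.
move=> [k hk].
exists (fun w => if w == v then k else tau w) => i; rewrite ltnS leq_eqVlt => /orP [/eqP ->|im].
  move=> x y xe ye.
  case: (eqVneq x v) => [->|xv]; case: (eqVneq y v) => [->|yv] //.
  - move=> h; case/negP: hk; rewrite h; apply: imset_f; by rewrite !inE yv.
  - move=> h; case/negP: hk; rewrite -h; apply: imset_f; by rewrite !inE xv.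
  - apply: (htau j jm); apply: (subsetP sj); by rewrite !inE ?xv ?yv.
move=> x y xe ye.
have xv : x != v by apply: contraNneq (vn i im) => <-.
have yv : y != v by apply: contraNneq (vn i im) => <-.
rewrite (negbTE xv) (negbTE yv); exact: (htau i im).
Qed.

Lemma embed (V W : finType) n (s : seq {set W}) (E K : {set {set V}})
  (c : V -> 'I_n.+1) (tau : W -> 'I_n.+1) :
  tight_tree_seq n.+1 s ->
  (forall i, i < size s -> {in nth set0 s i &, injective tau}) ->
  K \subset E -> (forall e, e \in E -> #|e| = n.+1) ->
  (forall e, e \in E -> {in e &, injective c}) ->
  goodb c (fun j => #|[set w | tau w == j]|) K -> K != set0 ->
  forall m, 0 < m <= size s -> exists phi : W -> V,
   [/\ {in Uset s m &, injective phi}, forall i, i < m -> phi @: nth set0 s i \in K &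
       {in Uset s m, forall w, c (phi w) = tau w}].
Proof.
move=> hs htau sKE hunif hinj hgood hK.
have cK : forall e, e \in K -> #|e| = n.+1 by move=> e /(subsetP sKE); apply: hunif.
have iK : forall e, e \in K -> {in e &, injective c} by move=> e /(subsetP sKE); apply: hinj.
elim=> [//|m IH] /andP [_ lt].
case: (posnP m) => [m0|mpos].
  subst m; have [g gK] := set0Pn _ hK.
  have [x0 _] : exists x0, x0 \in g by apply/card_gt0P; rewrite cK.
  have full := inj_full (cK g gK) (iK g gK).
  pose phi w := odflt x0 [pick x in g | c x == tau w].
  have hphi : forall w, phi w \in g /\ c (phi w) = tau w.
    move=> w; rewrite /phi; case: pickP => [x /andP [xg /eqP cx]|none] //=.
    exfalso; have : tau w \in c @: g by rewrite full inE.
    case/imsetP => x xg ex; move: (none x); by rewrite xg ex eqxx.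
  have U1 : forall w, (w \in Uset s 1) = (w \in nth set0 s 0).
    move=> w; apply/UsetP/idP => [[i]|h]; last by exists 0.
    by rewrite ltnS leqn0 => /eqP ->.
  have pinj : {in nth set0 s 0 &, injective phi}.
    move=> x y xe ye h; apply: (htau 0 (tts_size hs)) => //.
    by rewrite -(hphi x).2 -(hphi y).2 h.
  exists phi; split.
  - by move=> x y; rewrite !U1; apply: pinj.
  - move=> i; rewrite ltnS leqn0 => /eqP ->.
    have -> : phi @: nth set0 s 0 = g; last by [].
    apply/eqP; rewrite eqEcard; apply/andP; split.
      by apply/subsetP => _ /imsetP [w _ ->]; exact: (hphi w).1.
    by rewrite card_in_imset // (cK g gK) (tts_card hs (tts_size hs)).
  - by move=> w _; exact: (hphi w).2.
have [phi [pinj pK pcol]] := IH (ltac:(rewrite mpos; exact: ltnW)).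
have [v [vm vn [j jm sj]]] := tts_step hs (i := m) (ltac:(by rewrite mpos)).
set em := nth set0 s m in vm sj *.
set ej := nth set0 s j in sj *.
have vU : v \notin Uset s m by apply/UsetP => [[i im]]; apply/negP; exact: vn.
have emU : {subset em :\ v <= Uset s m}.
  by move=> w /(subsetP sj) wj; apply/UsetP; exists j.
set f := phi @: (em :\ v).
set g := phi @: ej.
have gK : g \in K := pK j jm.
have fg : f \subset g := imsetS phi sj.
have cem : #|em| = n.+1 := tts_card hs lt.
have cf : #|f| = n.
  rewrite card_in_imset; last by move=> x y /emU xu /emU yu; exact: pinj.
  have hc := cardsD1 v em; rewrite vm cem in hc; lia.
have colr : forall e' x, e' \in K -> x \in e' -> f \subset e' -> x \notin f -> c x = tau v.
  move=> e' x e'K xe' fe' xf.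
  apply: (missing cem (htau m lt) vm).
  apply/imsetP => [[w wD cxw]].
  case/negP: xf.
  have pw : phi w \in f by apply: imset_f.
  have e1 : c x = c (phi w) by rewrite (pcol w (emU w wD)) -cxw.
  by rewrite (iK e' e'K x (phi w) xe' (subsetP fe' _ pw) e1).
have [y yg yf] : exists2 y, y \in g & y \notin f.
  apply/subsetPn; apply/negP => gf; have := subset_leq_card gf.
  rewrite cf (cK g gK); lia.
set N := [set e' in K | f \subset e'].
have hN : #|[set w | tau w == tau v]| <= #|N|.
  move/forall_inP: hgood => /(_ g gK)/forall_inP/(_ y yg).
  rewrite (colr g y gK yg fg yf) => h; apply: leq_trans h _; apply: subset_leq_card.
  apply/subsetP => e'; rewrite !inE => /andP [e'K sub]; rewrite e'K /=.
  apply: subset_trans sub.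
  apply/subsetP => w wf; rewrite !inE (subsetP fg _ wf) andbT.
  by apply/eqP => wy; move: yf; rewrite -wy wf.
pose x0 := phi v.
pose h (e' : {set V}) := odflt x0 [pick x in e' :\: f].
have hN1 : forall e', e' \in N -> h e' \in e' :\: f.
  move=> e'; rewrite inE => /andP [e'K fe']; rewrite /h; case: pickP => [x ->//|none].
  exfalso; have : e' \subset f.
    by apply/subsetP => x xe'; move: (none x); rewrite !inE xe' andbT => /negbFE.
  by move/subset_leq_card; rewrite cf (cK e' e'K) ltnn.
have hNeq : forall e', e' \in N -> e' = h e' |: f.
  move=> e' e'N; have := hN1 e' e'N; rewrite inE => /andP [hf he].
  move: e'N; rewrite inE => /andP [e'K fe'].
  apply/eqP; rewrite eq_sym eqEcard; apply/andP; split.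
    by apply/subsetP => x; rewrite !inE => /orP [/eqP ->|/(subsetP fe')].
  by rewrite cardsU1 hf cf (cK e' e'K) add1n.
have hinjN : {in N &, injective h}.
  by move=> a b aN bN hab; rewrite (hNeq a aN) (hNeq b bN) hab.
have hcol : forall e', e' \in N -> c (h e') = tau v.
  move=> e' e'N; have := hN1 e' e'N; rewrite inE => /andP [hf he].
  move: e'N; rewrite inE => /andP [e'K fe']; exact: colr e' _ e'K he fe' hf.
set C := [set w | tau w == tau v] :\ v.
have : ~~ (h @: N \subset phi @: C).
  apply/negP => sub; have := subset_leq_card sub; rewrite (card_in_imset hinjN) => le.
  have := leq_trans hN (leq_trans le (leq_imset_card phi C)).
  have hc := cardsD1 v [set w | tau w == tau v]; rewrite inE eqxx in hc.
  by rewrite hc add1n ltnn.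
case/subsetPn => _ /imsetP [e' e'N ->] hz.
set z := h e' in hz.
have zU : forall w, w \in Uset s m -> phi w != z.
  move=> w wU; apply/eqP => pwz; case/negP: hz; rewrite -pwz; apply: imset_f.
  rewrite !inE -(pcol w wU) pwz (hcol e' e'N) eqxx andbT.
  by apply/eqP => wv; move: vU; rewrite -wv wU.
exists (fun w => if w == v then z else phi w); split.
- move=> a b aU bU.
  have := Uset_step vm jm sj aU; have := Uset_step vm jm sj bU.
  case: (eqVneq a v) => [->|av]; case: (eqVneq b v) => [->|bv] //= bU' aU'.
  + by move=> hz'; move: (zU b bU'); rewrite hz' eqxx.
  + by move=> hz'; move: (zU a aU'); rewrite hz' eqxx.
  + exact: pinj.
- move=> i; rewrite ltnS leq_eqVlt => /orP [/eqP ->|im].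
    have -> : [set (if w == v then z else phi w) | w in em] = z |: f.
      rewrite -{1}(setD1K vm) imsetU1 eqxx; congr (_ |: _); apply: eq_in_imset => w.
      by rewrite !inE => /andP [wv _]; rewrite (negbTE wv).
    by rewrite -(hNeq e' e'N); move: e'N; rewrite inE => /andP [].
  rewrite (@eq_in_imset _ _ _ phi) ?pK // => w wi.
  have : w != v by apply: contraNneq (vn i im) => <-.
  by move/negbTE ->.
- move=> w wU; have := Uset_step vm jm sj wU; case: (eqVneq w v) => [->|wv] /= h'.
  + exact: hcol.
  + exact: pcol.
Qed.

Lemma sum_Sj (V : finType) r (c : V -> 'I_r) (E : {set {set V}}) :
  (forall e, e \in E -> #|e| = r) -> (forall e, e \in E -> {in e &, injective c}) ->
  \sum_(j < r) #|Sj c j E| <= #|shadow r E|.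
Proof.
move=> hu hi.
have disj : forall i j, i != j -> [disjoint Sj c i E & Sj c j E].
  move=> i j ij; rewrite -setI_eq0; apply/eqP/setP => f; rewrite in_setI in_set0.
  apply/negP => /andP [/SjP [e [x [eE xe cx fe]]] /SjP [e' [x' [e'E x'e' cx' fe']]]].
  have : j \in c @: e by rewrite (inj_full (hu e eE) (hi e eE)) inE.
  case/imsetP => u ue cu.
  have ux : u != x by apply/eqP => ux; move: ij; rewrite -cx -ux cu eqxx.
  have uf : u \in f by rewrite fe !inE ux ue.
  move: uf; rewrite fe' !inE => /andP [ux' ue'].
  have := hi e' e'E u x' ue' x'e'; rewrite -cu cx' => /(_ erefl) uE.
  by rewrite uE eqxx in ux'.
under eq_bigr => j _ do rewrite -sum1_card.
rewrite -(@partition_disjoint_bigcup _ _ _ _ addn (fun j => Sj c j E) (fun _ => 1) disj) sum1_card.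
apply: subset_leq_card; apply/bigcupsP => j _; apply/subsetP => f /SjP [e [x [eE xe cx fe]]].
rewrite inE; apply/andP; split.
  have hc := cardsD1 x e; rewrite xe hu // in hc; rewrite fe; apply/eqP; lia.
by apply/existsP; exists e; rewrite eE fe subD1set.
Qed.

Lemma fiber_sum (T : finType) k (tau : T -> 'I_k) :
  \sum_(j < k) #|[set w | tau w == j]| = #|T|.
Proof.
rewrite -sum1_card (partition_big tau xpredT) //; apply: eq_bigr => j _.
rewrite -sum1_card; apply: eq_bigl => w; by rewrite inE.
Qed.
Unset Implicit Arguments. Set Strict Implicit. Set Printing Implicit Defensive.
From mathcomp Require Import ssralg zmodp.

Lemma shift_eq n (a b j : 'I_n.+2) : (((a + b)%R == j) = (a == (j - b)%R)).
Proof.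
apply/eqP/eqP => [<-|->]; by rewrite ?GRing.addrK ?GRing.subrK.
Qed.

Theorem theorem1p2 (r t : nat) (hr : 2 <= r) (ht : 1 <= t)
  (V : finType) (E : {set {set V}})
  (hunif : r_graph r E) (hpart : r_partite r E)
  (hdens : (t.-1) * #|shadow r E| < r * #|E|)
  (W : finType) (ET : {set {set W}})
  (hT : tight_tree r ET) (hTt : #|ET| = t) :
  contains_copy E ET.
Proof.
have [c hc] := hpart.
have hinj : forall e, e \in E -> {in e &, injective c}.
  by move=> e eE; apply: rainbow_inj; apply: hc.
case: hT => [[s [hs ETs]] cov].
have [n rn] : exists n, r = n.+2 by exists r.-2; lia.
subst r.
have huniq : uniq s.
  apply/(uniqP set0) => i k; rewrite !inE => il kl eq.
  have key : forall a b, a < b < size s -> nth set0 s a = nth set0 s b -> False.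
    move=> a b /andP [ab bs] eab.
    have [v [vb vn _]] := tts_step hs (i := b) (ltac:(apply/andP; split => //; lia)).
    by move: (vn a ab); rewrite eab vb.
  case: (ltngtP i k) => [ik|ki|//].
  - by exfalso; apply: (key i k) => //; rewrite ik.
  - by exfalso; apply: (key k i) => //; rewrite ki.
have hsize : size s = t by rewrite -hTt ETs cardsE; apply/esym/card_uniqP.
have Uall : forall w, w \in Uset s (size s).
  move=> w; have [e eET we] := cov w; move: eET; rewrite ETs inE => /(nthP set0) [i il ie].
  by apply/UsetP; exists i => //; rewrite ie.
have cardW : #|W| <= n.+2 + t.-1.
  rewrite -hsize; apply: leq_trans (Uset_card hs _) => //.
    by apply: subset_leq_card; apply/subsetP => w _; apply: Uall.
  by rewrite leqnn (tts_size hs).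
have [tau htau] := coloring hs.
pose a k := #|[set w | tau w == k]|.
have apos : forall k, 0 < a k.
  move=> k; have : k \in tau @: nth set0 s 0.
    by rewrite (inj_full (tts_card hs (tts_size hs)) (htau 0 (tts_size hs))) inE.
  case/imsetP => w _ kw; apply/card_gt0P; exists w; by rewrite inE kw.
have suma : \sum_(k < n.+2) (a k).-1 <= t.-1.
  have : \sum_(k < n.+2) (a k).-1 + n.+2 = #|W|.
    rewrite -(fiber_sum tau).
    apply: (@eq_trans _ _ (\sum_(k < n.+2) ((a k).-1 + 1))); last first.
      by apply: eq_bigr => k _; rewrite addn1 prednK.
    by rewrite big_split /= sum_nat_const card_ord muln1.
  lia.
pose tauS (s0 : 'I_n.+2) w := (tau w + s0)%R.
pose d s0 j := #|[set w | tauS s0 w == j]|.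
have [s0 hs0] : exists s0, cost c (d s0) E < #|E|.
  case: (pickP (fun s0 => cost c (d s0) E < #|E|)) => [s0 h|none]; first by exists s0.
  exfalso.
  have h1 : n.+2 * #|E| <= \sum_(s0 < n.+2) cost c (d s0) E.
    rewrite -{1}(card_ord n.+2) -sum_nat_const; apply: leq_sum => s0 _.
    by move: (none s0); rewrite /= ltnNge => /negbFE.
  have h2 : \sum_(s0 < n.+2) cost c (d s0) E <= t.-1 * #|shadow n.+2 E|.
    rewrite /cost exchange_big /=.
    apply: (@leq_trans (\sum_(j < n.+2) t.-1 * #|Sj c j E|)).
      apply: leq_sum => j _; rewrite -big_distrl /=; apply: leq_mul => //.
      have -> : \sum_(i < n.+2) (d i j).-1 = \sum_(k < n.+2) (a k).-1.
        rewrite [RHS](reindex_inj (@GRing.subrI _ j)) /=; apply: eq_bigr => i _.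
        by rewrite /d /a /tauS; congr (_.-1); apply: eq_card => w; rewrite !inE shift_eq.
      exact: suma.
    rewrite -big_distrr /=; apply: leq_mul => //; exact: sum_Sj.
  have := leq_ltn_trans (leq_trans h1 h2) hdens; by rewrite ltnn.
have [K [sKE gK cK]] := core c (d s0) E.
have Kne : K != set0.
  apply/negP => /eqP K0; move: cK; rewrite K0 cards0 add0n => h.
  by have := leq_ltn_trans h hs0; rewrite ltnn.
have htauS : forall i, i < size s -> {in nth set0 s i &, injective (tauS s0)}.
  move=> i il x y xe ye h; apply: (htau i il) => //; move: h; rewrite /tauS; exact: GRing.addIr.
have [phi [pinj pK pcol]] := @embed _ _ _ _ _ _ _ _ hs htauS sKE hunif hinj gK Kne (size s)
   (ltac:(by rewrite leqnn (tts_size hs))).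
exists phi; split.
  by move=> x y; apply: pinj; apply: Uall.
move=> e; rewrite ETs inE => /(nthP set0) [i il <-].
by apply: (subsetP sKE); apply: pK.
Qed.
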